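(* Let $n,d$ be integers, $0<\alpha<1$, and $d_1=\lceil 1000\log n/\alpha^2\rceil$. Then $T(n,d,\alpha)\le T(n,d_1,\alpha/2)$, where $T(n,d,\alpha)$ denotes the VC dimension of the $(1+\alpha)$-separate contrastive learning problem for $\ell_2$-distances in dimension $d$ on a dataset of size $n$.
   Context: $V$ is a finite set with $|V|=n$. A query is a triple $(u,v,w)$ of elements of $V$, labeled either $(u,v^+,w^-)$ or $(u,w^+,v^-)$. In the $(1+\alpha)$-separate problem for $\ell_2$ in dimension $d$, an embedding $f:V\to\mathbb R^d$ satisfies the labeled query $(u,v^+,w^-)$ if $(1+\alpha)\|f(u)-f(v)\|_2<\|f(u)-f(w)\|_2$ (symmetrically for $(u,w^+,v^-)$). A set $Q$ of queries is shattered if for every labeling of $Q$ there exists $f:V\to\mathbb R^d$ satisfying all labeled queries; $T(n,d,\alpha)$ is the maximum size of a shattered set. *)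

(* Defs.v *)
From HB Require Import structures.
From mathcomp Require Import all_boot all_order all_algebra.
From mathcomp Require Import all_classical all_reals.
From mathcomp Require Import exp.
Set Implicit Arguments. Unset Strict Implicit. Unset Printing Implicit Defensive.
Import Order.TTheory GRing.Theory Num.Theory.
Local Open Scope ring_scope.

Section Defs.
Variable R : realType.

Definition l2norm (d : nat) (x : 'rV[R]_d) : R :=
  Num.sqrt (\sum_(i < d) x 0 i ^+ 2).

Definition query (n : nat) : finType := ('I_n * 'I_n * 'I_n)%type.

(* A labeling assigns to a query (u,v,w) either [true], meaning the labeled
   query (u, v^+, w^-), or [false], meaning (u, w^+, v^-). *)
Definition satisfies (n d : nat) (alpha : R) (f : 'I_n -> 'rV[R]_d)
    (q : query n) (lab : bool) : Prop :=
  let: (u, v, w) := q in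
  if lab then (1 + alpha) * l2norm (f u - f v) < l2norm (f u - f w)
  else (1 + alpha) * l2norm (f u - f w) < l2norm (f u - f v).

Definition shattered (n d : nat) (alpha : R) (Q : {set query n}) : Prop :=
  forall lab : query n -> bool,
    exists f : 'I_n -> 'rV[R]_d,
      forall q, q \in Q -> satisfies alpha f q (lab q).

Definition T (n d : nat) (alpha : R) : nat :=
  \max_(Q : {set query n} | `[< shattered d alpha Q >]) #|Q|.

Definition d1 (n : nat) (alpha : R) : nat :=
  `| Num.ceil (1000 * ln (n%:R) / alpha ^+ 2) |%N.

End Defs.

(* Main.v *)
Require Import Defs.

From HB Require Import structures.
From mathcomp Require Import all_boot all_order all_algebra.
From mathcomp Require Import all_classical all_reals.
From mathcomp Require Import topology normedtype sequences exp.
From mathcomp Require Import ring lra zify.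
Import Order.TTheory GRing.Theory Num.Theory.
Import numFieldNormedType.Exports.
Set Implicit Arguments. Unset Strict Implicit. Unset Printing Implicit Defensive.
Local Open Scope ring_scope.

Section Alg.
Variable R : realType.

Lemma pair_nneg (a b : R) (m j : nat) : (j <= m)%N -> 0 <= a -> 0 <= b ->
  a ^+ (m - j) * b ^+ j + a ^+ j * b ^+ (m - j) <= a ^+ m + b ^+ m.
Proof.
move=> jm a0 b0.
have ea : a ^+ m = a ^+ (m - j) * a ^+ j by rewrite -exprD subnK.
have eb : b ^+ m = b ^+ (m - j) * b ^+ j by rewrite -exprD subnK.
have : 0 <= (a ^+ j - b ^+ j) * (a ^+ (m - j) - b ^+ (m - j)).
  have [ab|ba] := lerP a b.
    rewrite mulr_le0 // subr_le0 lerXn2r // ?nnegrE //.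
  rewrite mulr_ge0 // subr_ge0 lerXn2r // ?nnegrE // ltW //.
rewrite ea eb => H.
have E : a ^+ (m - j) * a ^+ j + b ^+ (m - j) * b ^+ j -
    (a ^+ (m - j) * b ^+ j + a ^+ j * b ^+ (m - j)) =
    (a ^+ j - b ^+ j) * (a ^+ (m - j) - b ^+ (m - j)) by ring.
by rewrite -subr_ge0 E.
Qed.

Lemma pair_real (u v : R) (p j : nat) : (j <= p.*2)%N ->
  u ^+ (p.*2 - j) * v ^+ j + u ^+ j * v ^+ (p.*2 - j) <= u ^+ p.*2 + v ^+ p.*2.
Proof.
move=> jm.
have Hu : u ^+ p.*2 = `|u| ^+ p.*2.
  by rewrite -normrX ger0_norm // exprn_even_ge0 // odd_double.
have Hv : v ^+ p.*2 = `|v| ^+ p.*2.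
  by rewrite -normrX ger0_norm // exprn_even_ge0 // odd_double.
rewrite Hu Hv.
have := @pair_nneg `|u| `|v| p.*2 j jm (normr_ge0 u) (normr_ge0 v). apply: le_trans.
apply: lerD; rewrite -!normrX -normrM; exact: ler_norm.
Qed.

Lemma key_ineq (u v : R) (p : nat) :
  2 * ((u - v) * (u ^+ p.*2.+1 - v ^+ p.*2.+1)) <=
  p.*2.+1%:R * ((u - v) ^+ 2 * (u ^+ p.*2 + v ^+ p.*2)).
Proof.
rewrite subrXX /=.
set S := \sum_(i < p.*2.+1) _.
have HS : 2 * S <= p.*2.+1%:R * (u ^+ p.*2 + v ^+ p.*2).
  have -> : 2 * S = \sum_(i < p.*2.+1)
      (u ^+ (p.*2 - i) * v ^+ i + u ^+ i * v ^+ (p.*2 - i)).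
    rewrite big_split /= mulr2n mulrDl mul1r; congr (_ + _).
    rewrite /S (reindex_inj rev_ord_inj) /=; apply: eq_bigr => i _.
    rewrite subKn // -ltnS //.
  have -> : p.*2.+1%:R * (u ^+ p.*2 + v ^+ p.*2) =
     \sum_(i < p.*2.+1) (u ^+ p.*2 + v ^+ p.*2).
    by rewrite sumr_const card_ord mulr_natl.
  apply: ler_sum => i _; apply: pair_real; rewrite -ltnS //.
have -> : 2 * ((u - v) * ((u - v) * S)) = (u - v) ^+ 2 * (2 * S) by ring.
rewrite [X in _ <= X]mulrCA; apply: ler_wpM2l => //; exact: sqr_ge0.
Qed.

End Alg.
Section Sign.
Variable R : realType.
Variable d : nat.
Implicit Types (x : 'I_d -> R) (r : {ffun 'I_d -> bool}).
Local Notation SV := {ffun 'I_d -> bool}.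

Definition sg (b : bool) : R := if b then 1 else -1.
Definition Zs x r : R := \sum_i sg (r i) * x i.
Definition sq x : R := \sum_i x i ^+ 2.
Definition flip (i : 'I_d) r : {ffun 'I_d -> bool} :=
  [ffun j => if j == i then ~~ r j else r j].

Lemma sg2 b : sg b ^+ 2 = 1.
Proof. by case: b; rewrite /sg ?expr1n ?sqrrN ?expr1n. Qed.

Lemma sgN b : sg (~~ b) = - sg b.
Proof. by case: b; rewrite /sg ?opprK. Qed.

Lemma flipK i : involutive (flip i).
Proof.
move=> r; apply/ffunP => j; rewrite !ffunE.
by case: eqP => [->|_]; rewrite ?ffunE ?eqxx ?negbK //; case: eqP.
Qed.

Lemma sum_flip i (F : {ffun 'I_d -> bool} -> R) :
  \sum_(r : SV) F r = \sum_(r : SV) F (flip i r).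
Proof. exact: (reindex_inj (can_inj (flipK i))). Qed.

Lemma half_trick i (F : {ffun 'I_d -> bool} -> R) :
  \sum_(r : SV) F r = 2^-1 * \sum_(r : SV) (F r + F (flip i r)).
Proof.
rewrite big_split /= -sum_flip; lra.
Qed.

Lemma Z_flip x r i : Zs x r - Zs x (flip i r) = 2 * (sg (r i) * x i).
Proof.
rewrite /Zs (bigD1 i) //= [X in _ - X](bigD1 i) //=.
rewrite ffunE eqxx sgN.
have -> : \sum_(j < d | j != i) sg (flip i r j) * x j =
          \sum_(j < d | j != i) sg (r j) * x j.
  by apply: eq_bigr => j /negbTE ji; rewrite ffunE ji.
ring.
Qed.

Lemma sg_flip r i : sg (flip i r i) = - sg (r i).
Proof. by rewrite ffunE eqxx sgN. Qed.

Definition Mom x (p : nat) : R := \sum_(r : SV) Zs x r ^+ p.*2.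

Lemma mom_i x p i :
  \sum_(r : SV) (sg (r i) * x i) * Zs x r ^+ p.*2.+1 <=
  p.*2.+1%:R * x i ^+ 2 * Mom x p.
Proof.
rewrite (half_trick i).
have H : forall r, sg (r i) * x i * Zs x r ^+ p.*2.+1 +
     sg (flip i r i) * x i * Zs x (flip i r) ^+ p.*2.+1 <=
     p.*2.+1%:R * x i ^+ 2 * (Zs x r ^+ p.*2 + Zs x (flip i r) ^+ p.*2).
  move=> r; set u := Zs x r; set v := Zs x (flip i r).
  have Huv := Z_flip x r i; rewrite -/u -/v in Huv.
  have K := @key_ineq R u v p.
  rewrite Huv sg_flip in K *.
  set y := sg (r i) * x i in Huv K *.
  have Hy : y ^+ 2 = x i ^+ 2 by rewrite /y exprMn sg2 mul1r.
  rewrite -Hy.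
  have E1 : sg (r i) * x i * u ^+ p.*2.+1 + - sg (r i) * x i * v ^+ p.*2.+1
      = y * (u ^+ p.*2.+1 - v ^+ p.*2.+1) by rewrite /y; ring.
  rewrite E1.
  have E2 : (2 * y) ^+ 2 = 4 * y ^+ 2 by ring.
  rewrite E2 in K.
  have E3 : 2 * (2 * y * (u ^+ p.*2.+1 - v ^+ p.*2.+1)) =
            4 * (y * (u ^+ p.*2.+1 - v ^+ p.*2.+1)) by ring.
  rewrite E3 in K.
  have E4 : p.*2.+1%:R * (4 * y ^+ 2 * (u ^+ p.*2 + v ^+ p.*2)) =
     4 * (p.*2.+1%:R * y ^+ 2 * (u ^+ p.*2 + v ^+ p.*2)) by ring.
  rewrite E4 in K.
  by rewrite ler_pM2l in K.
have HS : \sum_(r : SV) (sg (r i) * x i * Zs x r ^+ p.*2.+1 +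
     sg (flip i r i) * x i * Zs x (flip i r) ^+ p.*2.+1) <=
   \sum_(r : SV) (p.*2.+1%:R * x i ^+ 2 * (Zs x r ^+ p.*2 + Zs x (flip i r) ^+ p.*2)).
  by apply: ler_sum => r _; exact: H.
have H2 : 0 <= (2:R)^-1 by rewrite invr_ge0.
have HH := ler_wpM2l H2 HS.
apply: le_trans HH _.
rewrite -mulr_sumr big_split /= -(sum_flip i (fun r => Zs x r ^+ p.*2)).
rewrite -/(Mom x p).
set c := p.*2.+1%:R * x i ^+ 2; set M := Mom x p.
have -> : 2^-1 * (c * (M + M)) = c * M by field.
by [].
Qed.

Lemma mom_step x p : Mom x p.+1 <= p.*2.+1%:R * sq x * Mom x p.
Proof.
have E : Mom x p.+1 = \sum_i \sum_(r : SV) (sg (r i) * x i) * Zs x r ^+ p.*2.+1.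
  rewrite exchange_big /=; apply: eq_bigr => r _.
  by rewrite doubleS exprS -/(Zs x r) mulr_suml.
rewrite E /sq mulr_sumr mulr_suml; apply: ler_sum => i _.
exact (mom_i x p i).
Qed.

Definition Nsg : R := \sum_(r : {ffun 'I_d -> bool}) 1.

Lemma mom0 x : Mom x 0 = Nsg.
Proof. by apply: eq_bigr => r _; rewrite expr0. Qed.

Lemma mom1 x : Mom x 1 = sq x * Nsg.
Proof.
have E : Mom x 1 = \sum_i \sum_(r : SV) (sg (r i) * x i) * Zs x r.
  rewrite exchange_big /=; apply: eq_bigr => r _.
  by rewrite expr2 -/(Zs x r) mulr_suml.
rewrite E /sq mulr_suml; apply: eq_bigr => i _.
rewrite (half_trick i).
have H : forall r, sg (r i) * x i * Zs x r +
     sg (flip i r i) * x i * Zs x (flip i r) = 2 * (x i ^+ 2).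
  move=> r; have Huv := Z_flip x r i.
  rewrite sg_flip.
  have Hy : (sg (r i) * x i) ^+ 2 = x i ^+ 2 by rewrite exprMn sg2 mul1r.
  rewrite -Hy; set y := sg (r i) * x i in Huv *.
  have -> : sg (r i) * x i * Zs x r + - sg (r i) * x i * Zs x (flip i r) =
     y * (Zs x r - Zs x (flip i r)) by rewrite /y; ring.
  rewrite Huv; ring.
rewrite (eq_bigr _ (fun r _ => H r)).
have -> : \sum_(r:SV) 2 * x i ^+ 2 = 2 * x i ^+ 2 * Nsg.
  by rewrite /Nsg mulr_sumr; apply: eq_bigr => r _; rewrite mulr1.
by field.
Qed.

Lemma Nsg_gt0 : 0 < Nsg.
Proof.
rewrite /Nsg sumr_const; rewrite pmulrn_lgt0 // card_ffun card_bool card_ord.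
by rewrite expn_gt0.
Qed.

Lemma sq_ge0 x : 0 <= sq x.
Proof. by apply: sumr_ge0 => i _; exact: sqr_ge0. Qed.

Lemma Mom_ge0 x p : 0 <= Mom x p.
Proof. by apply: sumr_ge0 => r _; rewrite exprn_even_ge0 // odd_double. Qed.

End Sign.
Section Lim.
Variable R : realType.

Lemma sum_expR_le (T : finType) (F : T -> R) (B : R) :
  (forall K, \sum_(t : T) \sum_(m < K) F t ^+ m / m`!%:R <= B) ->
  \sum_(t : T) expR (F t) <= B.
Proof.
move=> HK.
have cv : ((fun K : nat => \sum_(t : T) series (exp_coeff (F t)) K : R) @ \oo -->
          (\sum_(t : T) expR (F t) : R))%classic.
  apply: cvg_big => //; first exact: add_continuous.
  move=> t _; exact: is_cvg_series_exp_coeff.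
rewrite -(cvg_lim _ cv) //.
apply: limr_le; first by apply/cvg_ex; eexists; exact: cv.
near=> K; apply: le_trans (HK K).
apply: ler_sum => t _; rewrite /series /= big_mkord; apply: ler_sum => m _.
by rewrite /exp_coeff /=.
Unshelve. all: by end_near.
Qed.

Lemma expR_ge_quad (u : R) : 0 <= u -> 1 + u + u ^+ 2 / 2 <= expR u.
Proof.
move=> u0; rewrite /expR.
have ND : nondecreasing_seq (series (exp_coeff u)).
  apply/nondecreasing_seqP => n; rewrite /series /= big_nat_recr //=.
  by rewrite lerDl /exp_coeff /= divr_ge0 // exprn_ge0.
apply: le_trans (nondecreasing_cvgn_le ND (is_cvg_series_exp_coeff u) 3).
rewrite /series /= big_mkord !big_ord_recr big_ord0 /= /exp_coeff /=.
rewrite expr0 expr1 !divr1 add0r.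
by [].
Qed.
End Lim.
Section MGF.
Variable R : realType.
Variable d : nat.
Local Notation SV := {ffun 'I_d -> bool}.
Variable x : 'I_d -> R.
Variable t : R.
Hypothesis t0 : 0 <= t.
Local Notation tau := (t * sq x).
Hypothesis tau14 : tau <= 4^-1.

Lemma eqle (a b : R) : a = b -> a <= b. Proof. by move->. Qed.

Definition w (m : nat) : R := t ^+ m * Mom x m / m`!%:R.

Lemma w_ge0 m : 0 <= w m.
Proof.
by rewrite /w divr_ge0 // mulr_ge0 // ?exprn_ge0 // Mom_ge0.
Qed.

Lemma tau_ge0 : 0 <= tau.
Proof. by rewrite mulr_ge0 // sq_ge0. Qed.

Lemma w_step m : w m.+1 <= tau * ((m.*2.+1)%:R / (m.+1)%:R) * w m.
Proof.
have H := mom_step x m.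
have c0 : 0 <= t ^+ m.+1 / (m.+1)`!%:R by rewrite divr_ge0 // exprn_ge0.
have := ler_wpM2l c0 H.
have -> : t ^+ m.+1 / (m.+1)`!%:R * Mom x m.+1 = w m.+1 by rewrite /w; ring.
move=> /le_trans; apply; apply: eqle.
rewrite /w factS natrM exprS.
have hm : (m.+1)%:R != 0 :> R by rewrite pnatr_eq0.
have hf : (m`!)%:R != 0 :> R by rewrite pnatr_eq0 -lt0n fact_gt0.
by field; rewrite hf /= addrC natr1 pnatr_eq0.
Qed.

Lemma w_step2 m : w m.+1 <= 2 * tau * w m.
Proof.
apply: le_trans (w_step m) _.
have hc : (m.*2.+1)%:R / (m.+1)%:R <= 2 :> R.
  rewrite ler_pdivrMr ?ltr0Sn // -natrM ler_nat; lia.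
have htw : 0 <= tau * w m by rewrite mulr_ge0 // ?w_ge0 // tau_ge0.
set c := (m.*2.+1)%:R / (m.+1)%:R in hc *.
set T := tau in htw *; set W := w m in htw *.
nra.
Qed.

Lemma w0 : w 0 = Nsg R d.
Proof. by rewrite /w mom0 expr0 mul1r fact0 divr1. Qed.

Lemma w1 : w 1 <= tau * Nsg R d.
Proof.
apply: le_trans (w_step 0) _; rewrite w0 /= divr1 mulr1 //.
Qed.

Lemma partial_bound K :
  \sum_(m < K) w m <= Nsg R d * (1 + tau + 4 * tau ^+ 2).
Proof.
have N0 := Nsg_gt0 R d.
have inv : forall K, \sum_(m < K.+2) w m + 2 * w K.+2 <=
                     Nsg R d * (1 + tau + 4 * tau ^+ 2).
  elim=> [|k IH].
    rewrite !big_ord_recr big_ord0 /= add0r.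
    have h1 := w1; have h2 := w_step 1.
    have h0 := tau_ge0.
    rewrite w0 /=.
    have h2' : w 2 <= tau * (3 / 2) * (tau * Nsg R d).
      apply: le_trans h2 _.
      have -> : (1.*2.+1)%:R / (1.+1)%:R = 3 / 2 :> R by [].
      apply: ler_wpM2l; last exact: w1.
      by rewrite mulr_ge0 // divr_ge0.
    have e : tau * (3 / 2) * (tau * Nsg R d) = (3/2) * (tau ^+ 2 * Nsg R d) by ring.
    rewrite e in h2'.
    have : 0 <= tau ^+ 2 * Nsg R d by rewrite mulr_ge0 // ?sqr_ge0 // ltW.
    nra.
  rewrite big_ord_recr /=.
  have h := w_step2 k.+2; have hw := w_ge0 k.+2.
  have h0 := tau_ge0.
  have : 2 * w k.+3 <= w k.+2.
    have ht := tau14.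
    set T := tau in h h0 ht *; set W := w k.+2 in h hw *.
    nra.
  lra.
apply: le_trans (inv K); apply: le_trans (_ : \sum_(m < K.+2) w m <= _).
  rewrite !big_ord_recr /= -addrA lerDl; apply: addr_ge0; exact: w_ge0.
by rewrite lerDl mulr_ge0 // w_ge0.
Qed.

Lemma mgf_upper :
  \sum_(r : SV) expR (t * Zs x r ^+ 2) <= Nsg R d * (1 + tau + 4 * tau ^+ 2).
Proof.
apply: sum_expR_le => K; apply: le_trans (partial_bound K); apply: eqle.
rewrite exchange_big /=; apply: eq_bigr => m _.
rewrite /w /Mom mulr_sumr mulr_suml; apply: eq_bigr => r _.
by rewrite exprMn -exprM mul2n.
Qed.

Lemma expRN_quad (u : R) : 0 <= u -> expR (- u) <= 1 - u + u ^+ 2 / 2.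
Proof.
move=> u0; have E := expR_ge_quad u0.
have Q0 : 0 <= 1 - u + u ^+ 2 / 2.
  have -> : 1 - u + u ^+ 2 / 2 = ((u - 1) ^+ 2 + 1) / 2 by field.
  by rewrite divr_ge0 // addr_ge0 // sqr_ge0.
have H : 1 <= (1 - u + u ^+ 2 / 2) * expR u.
  apply: le_trans (ler_wpM2l Q0 E).
  have -> : (1 - u + u ^+ 2 / 2) * (1 + u + u ^+ 2 / 2) = 1 + u ^+ 4 / 4 by field.
  by rewrite lerDl divr_ge0 // exprn_even_ge0.
rewrite expRN -div1r ler_pdivrMr ?expR_gt0 //.
Qed.

Lemma mgf_lower :
  \sum_(r : SV) expR (- (t * Zs x r ^+ 2)) <= Nsg R d * (1 - tau + 3 / 2 * tau ^+ 2).
Proof.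
apply: le_trans (_ : \sum_(r : SV) (1 - t * Zs x r ^+ 2 + (t * Zs x r ^+ 2) ^+ 2 / 2) <= _).
  apply: ler_sum => r _; apply: expRN_quad; by rewrite mulr_ge0 // sqr_ge0.
have E : \sum_(r : SV) (1 - t * Zs x r ^+ 2 + (t * Zs x r ^+ 2) ^+ 2 / 2) =
   Nsg R d - t * Mom x 1 + t ^+ 2 / 2 * Mom x 2.
  rewrite /Mom /Nsg !mulr_sumr -sumrN -!big_split /=; apply: eq_bigr => r _.
  ring.
rewrite E mom1.
have M2 := mom_step x 1; rewrite mom1 in M2.
have e3 : (1.*2.+1)%:R = 3 :> R by [].
rewrite e3 in M2.
have N0 := Nsg_gt0 R d.
have s0 := sq_ge0 x.
have ht : 0 <= t ^+ 2 / 2 by rewrite divr_ge0 // sqr_ge0.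
have := ler_wpM2l ht M2.
set N := Nsg R d in N0 *; set s := sq x in s0 *; set M := Mom x 2.
move=> H.
have -> : N * (1 - t * s + 3 / 2 * (t * s) ^+ 2) =
   N - t * (s * N) + t ^+ 2 / 2 * (3 * s * (s * N)) by field.
lra.
Qed.

End MGF.
Section Chern.
Variable R : realType.
Variables d k : nat.
Local Notation SV := {ffun 'I_d -> bool}.
Local Notation MS := {ffun 'I_k -> SV}.

Definition Y (x : 'I_d -> R) (S : MS) : R := \sum_(j < k) Zs x (S j) ^+ 2.

Lemma prod_sum (g : SV -> R) :
  \sum_(S : MS) \prod_(j < k) g (S j) = (\sum_(r : SV) g r) ^+ k.
Proof.
rewrite -(bigA_distr_bigA (fun (j : 'I_k) (r : SV) => g r)) /=.
by rewrite prodr_const card_ord.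
Qed.

Lemma card_MS : \sum_(S : MS) (1 : R) = Nsg R d ^+ k.
Proof.
rewrite -prod_sum; apply: eq_bigr => S _; by rewrite prodr_const expr1n.
Qed.

Definition ind (c : bool) : R := if c then 1 else 0.

Lemma ind_le (a b : R) (t : R) : 0 <= t -> 0 < t ->
  ind (a < b) <= expR (t * (b - a)).
Proof.
move=> _ tp; rewrite /ind; case: (boolP (a < b)) => ab /=; last exact: expR_ge0.
by apply: ltW; rewrite expR_gt1 mulr_gt0 // subr_gt0.
Qed.

Lemma pow_bound (N a b : R) : 0 < N -> 0 <= a -> a <= expR b ->
  (N * a) ^+ k <= N ^+ k * expR (k%:R * b).
Proof.
move=> N0 a0 ab; rewrite expRM_natl -exprMn.
apply: lerXn2r.
- by rewrite nnegrE mulr_ge0 // ltW.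
- by rewrite nnegrE mulr_ge0 ?expR_ge0 // ltW.
- by apply: ler_wpM2l => //; exact: ltW.
Qed.

Lemma chern_upper (x : 'I_d -> R) (eps tau : R) : 0 < sq x -> 0 < tau -> tau <= 4^-1 ->
  \sum_(S : MS) ind ((1 + eps) * k%:R * sq x < Y x S) <=
  Nsg R d ^+ k * expR (- (k%:R * (tau * eps - 4 * tau ^+ 2))).
Proof.
move=> s0 tau0 tau14.
set t := tau / sq x.
have t0 : 0 < t by rewrite divr_gt0.
have etau : t * sq x = tau by rewrite /t divfK // gt_eqF.
apply: le_trans (_ : \sum_(S : MS) expR (t * (Y x S - (1 + eps) * k%:R * sq x)) <= _).
  by apply: ler_sum => S _; apply: ind_le => //; exact: ltW.
have E : \sum_(S : MS) expR (t * (Y x S - (1 + eps) * k%:R * sq x)) =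
  expR (- (t * ((1 + eps) * k%:R * sq x))) *
  \sum_(S : MS) \prod_(j < k) expR (t * Zs x (S j) ^+ 2).
  rewrite [RHS]mulr_sumr; apply: eq_bigr => S _.
  rewrite -expR_sum -expRD; congr expR.
  rewrite /Y -[X in _ = _ + X]mulr_sumr; ring.
rewrite E (prod_sum (fun r => expR (t * Zs x r ^+ 2))).
have U := mgf_upper (x := x) (ltW t0).
rewrite etau in U; have U' := U tau14.
have N0 := Nsg_gt0 R d.
have a0 : 0 <= 1 + tau + 4 * tau ^+ 2 by rewrite addr_ge0 ?addr_ge0 ?mulr_ge0 ?sqr_ge0 // ltW.
have P1 : (\sum_(r : SV) expR (t * Zs x r ^+ 2)) ^+ k <=
          (Nsg R d * (1 + tau + 4 * tau ^+ 2)) ^+ k.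
  apply: lerXn2r => //; rewrite nnegrE.
    by apply: sumr_ge0 => r _; exact: expR_ge0.
  by rewrite mulr_ge0 // ltW.
have P2 := @pow_bound (Nsg R d) _ (tau + 4 * tau ^+ 2) N0 a0.
rewrite -addrA in P2; have P2' := P2 (expR_ge1Dx _).
rewrite addrA in P2'.
apply: le_trans (ler_wpM2l (expR_ge0 _) (le_trans P1 P2')) _.
rewrite mulrCA -expRD.
have -> : t * ((1 + eps) * k%:R * sq x) = tau * (1 + eps) * k%:R by rewrite -etau; ring.
apply: eqle; congr (_ * expR _); ring.
Qed.

Lemma chern_lower (x : 'I_d -> R) (eps tau : R) : 0 < sq x -> 0 < tau ->
  \sum_(S : MS) ind (Y x S < (1 - eps) * k%:R * sq x) <=
  Nsg R d ^+ k * expR (- (k%:R * (tau * eps - 3 / 2 * tau ^+ 2))).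
Proof.
move=> s0 tau0.
set t := tau / sq x.
have t0 : 0 < t by rewrite divr_gt0.
have etau : t * sq x = tau by rewrite /t divfK // gt_eqF.
apply: le_trans (_ : \sum_(S : MS) expR (t * ((1 - eps) * k%:R * sq x - Y x S)) <= _).
  by apply: ler_sum => S _; apply: ind_le => //; exact: ltW.
have E : \sum_(S : MS) expR (t * ((1 - eps) * k%:R * sq x - Y x S)) =
  expR (t * ((1 - eps) * k%:R * sq x)) *
  \sum_(S : MS) \prod_(j < k) expR (- (t * Zs x (S j) ^+ 2)).
  rewrite [RHS]mulr_sumr; apply: eq_bigr => S _.
  rewrite -expR_sum -expRD; congr expR.
  rewrite /Y sumrN -[X in _ = _ - X]mulr_sumr; ring.
rewrite E (prod_sum (fun r => expR (- (t * Zs x r ^+ 2)))).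
have U := mgf_lower x (ltW t0).
rewrite etau in U.
have N0 := Nsg_gt0 R d.
have a0 : 0 <= 1 - tau + 3 / 2 * tau ^+ 2.
  have h := sqr_ge0 (tau - 1/3); nra.
have P1 : (\sum_(r : SV) expR (- (t * Zs x r ^+ 2))) ^+ k <=
          (Nsg R d * (1 - tau + 3 / 2 * tau ^+ 2)) ^+ k.
  apply: lerXn2r => //; rewrite nnegrE.
    by apply: sumr_ge0 => r _; exact: expR_ge0.
  by rewrite mulr_ge0 // ltW.
have P2 := @pow_bound (Nsg R d) _ (- tau + 3 / 2 * tau ^+ 2) N0 a0.
rewrite -addrA in P2; have P2' := P2 (expR_ge1Dx _).
rewrite addrA in P2'.
apply: le_trans (ler_wpM2l (expR_ge0 _) (le_trans P1 P2')) _.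
rewrite mulrCA -expRD.
have -> : t * ((1 - eps) * k%:R * sq x) = tau * (1 - eps) * k%:R by rewrite -etau; ring.
apply: eqle; congr (_ * expR _); ring.
Qed.
End Chern.
Section Final.
Variable R : realType.

Lemma sq0 d (x : 'I_d -> R) : sq x = 0 -> forall i, x i = 0.
Proof.
move=> h i; apply/eqP; rewrite -sqrf_eq0; apply/eqP.
by apply: (psumr_eq0P _ h) => // j _; exact: sqr_ge0.
Qed.

Lemma Y0 d k (x : 'I_d -> R) S : sq x = 0 -> Y (k:=k) x S = 0.
Proof.
move=> h; rewrite /Y big1 // => j _; rewrite /Zs big1 ?expr0n // => i _.
by rewrite sq0 // mulr0.
Qed.

Lemma pair_bound d k (x : 'I_d -> R) (a L : R) : 0 < a -> a < 1 -> 0 <= L ->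
  1000 * L <= k%:R * a ^+ 2 ->
  \sum_(S : {ffun 'I_k -> {ffun 'I_d -> bool}})
    (ind R ((1 + a / 3) * k%:R * sq x < Y x S) +
     ind R (Y x S < (1 - a / 5) * k%:R * sq x)) <=
  2 * (Nsg R d ^+ k * expR (- (4 * L))).
Proof.
move=> a0 a1 L0 kL.
have N0 := Nsg_gt0 R d.
have rhs0 : 0 <= 2 * (Nsg R d ^+ k * expR (- (4 * L))).
  by rewrite mulr_ge0 // mulr_ge0 ?expR_ge0 // exprn_ge0 // ltW.
have [s0|s0] := eqVneq (sq x) 0.
  rewrite big1 => [|S _]; first exact: rhs0.
  by rewrite Y0 // s0 !mulr0 ltxx /ind /= addr0.
have sp : 0 < sq x by rewrite lt0r s0 sq_ge0.
set B := Nsg R d ^+ k * expR (- (4 * L)).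
have -> : 2 * B = B + B by ring.
rewrite big_split /=; apply: lerD.
  apply: le_trans (chern_upper k (a / 3) sp (tau := a / 24) _ _) _.
  - by rewrite divr_gt0.
  - lra.
  apply: ler_wpM2l; first by rewrite exprn_ge0 // ltW.
  rewrite ler_expR lerN2.
  have -> : k%:R * (a / 24 * (a / 3) - 4 * (a / 24) ^+ 2) = (k%:R * a ^+ 2) / 144 by field.
  lra.
apply: le_trans (chern_lower k (a / 5) sp (tau := a / 15) _) _.
  by rewrite divr_gt0.
apply: ler_wpM2l; first by rewrite exprn_ge0 // ltW.
rewrite ler_expR lerN2.
have -> : k%:R * (a / 15 * (a / 5) - 3 / 2 * (a / 15) ^+ 2) = (k%:R * a ^+ 2) / 150 by field.
lra.
Qed.

Lemma sum_ge_term (T : finType) (F : T -> R) (i0 : T) :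
  (forall i, 0 <= F i) -> F i0 <= \sum_i F i.
Proof.
move=> F0; rewrite (bigD1 i0) //= lerDl; apply: sumr_ge0 => i _; exact: F0.
Qed.

Lemma ind_ge0 c : 0 <= ind R c.
Proof. by rewrite /ind; case: c. Qed.

Lemma exists_good n d k (f : 'I_n -> 'rV[R]_d) (a : R) :
  0 < a -> a < 1 -> (2 <= n)%N -> 1000 * ln (n%:R : R) <= k%:R * a ^+ 2 ->
  exists S : {ffun 'I_k -> {ffun 'I_d -> bool}}, forall u v : 'I_n,
    ~~ ((1 + a / 3) * k%:R * sq (fun i => f u 0 i - f v 0 i) <
        Y (fun i => f u 0 i - f v 0 i) S) /\
    ~~ (Y (fun i => f u 0 i - f v 0 i) S <
        (1 - a / 5) * k%:R * sq (fun i => f u 0 i - f v 0 i)).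
Proof.
move=> a0 a1 n2 kL.
set L := ln (n%:R : R).
have n1 : (1 : R) <= n%:R by rewrite (ler_nat R 1 n); lia.
have L0 : 0 <= L by apply: ln_ge0.
pose x (u v : 'I_n) := fun i => f u 0 i - f v 0 i.
pose bad (S : {ffun 'I_k -> {ffun 'I_d -> bool}}) (u v : 'I_n) := ind R ((1 + a / 3) * k%:R * sq (x u v) < Y (x u v) S) +
     ind R (Y (x u v) S < (1 - a / 5) * k%:R * sq (x u v)).
have bad0 : forall S u v, 0 <= bad S u v by move=> S u v; rewrite addr_ge0 // ind_ge0.
set B := Nsg R d ^+ k * expR (- (4 * L)).
have HB : \sum_(S : {ffun 'I_k -> {ffun 'I_d -> bool}}) \sum_u \sum_v bad S u v <=
          (n * n)%:R * (2 * B).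
  have E : \sum_(S : {ffun 'I_k -> {ffun 'I_d -> bool}}) \sum_u \sum_v bad S u v =
     \sum_u \sum_v \sum_(S : {ffun 'I_k -> {ffun 'I_d -> bool}}) bad S u v.
    by rewrite exchange_big; apply: eq_bigr => u _; rewrite exchange_big.
  rewrite E; apply: le_trans (_ : \sum_(u : 'I_n) \sum_(v : 'I_n) (2 * B) <= _).
    apply: ler_sum => u _; apply: ler_sum => v _.
    by rewrite /bad; apply: pair_bound.
  by apply: eqle; rewrite sumr_const sumr_const card_ord -mulrnA [RHS]mulr_natl.
have Hlt : (n * n)%:R * (2 * B) < Nsg R d ^+ k.
  have np : (0 < n)%N by lia.
  have eL : expR (- (4 * L)) = (n%:R ^+ 4)^-1.
    by rewrite expRN expRM_natl lnK // posrE ltr0n.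
  have M0 : 0 < Nsg R d ^+ k by rewrite exprn_gt0 // Nsg_gt0.
  rewrite /B eL natrM.
  set M := Nsg R d ^+ k in M0 *; set m := (n%:R : R).
  have m2 : 2 <= m by rewrite /m (ler_nat R 2 n).
  have mn0 : m != 0 by rewrite gt_eqF // (lt_le_trans _ m2).
  have -> : m * m * (2 * (M * (m ^+ 4)^-1)) = M * (2 / (m * m)) by field.
  rewrite -[X in _ < X]mulr1 ltr_pM2l // ltr_pdivrMr ?mulr_gt0 ?(lt_le_trans _ m2) //.
  nra.
case: (boolP [exists S : {ffun 'I_k -> {ffun 'I_d -> bool}}, [forall u, [forall v,
   ~~ ((1 + a / 3) * k%:R * sq (x u v) < Y (x u v) S) &&
   ~~ (Y (x u v) S < (1 - a / 5) * k%:R * sq (x u v))]]]).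
  move=> /existsP [S /forallP HS]; exists S => u v.
  have /forallP /(_ v) /andP [h1 h2] := HS u; split; [exact: h1 | exact: h2].
rewrite negb_exists => /forallP HS.
exfalso.
have : Nsg R d ^+ k <= \sum_(S : {ffun 'I_k -> {ffun 'I_d -> bool}}) \sum_u \sum_v bad S u v.
  rewrite -card_MS; apply: ler_sum => S _.
  have := HS S; rewrite negb_forall => /existsP [u].
  rewrite negb_forall => /existsP [v].
  rewrite negb_and !negbK => H.
  apply: le_trans (sum_ge_term u _) => [|u'].
    apply: le_trans (sum_ge_term v _) => [|v']; last exact: bad0.
    by rewrite /bad /ind; case/orP: H => -> /=; [rewrite lerDl; case: ifP | rewrite lerDr; case: ifP].
  by apply: sumr_ge0 => v' _; exact: bad0.
move=> H; have := le_lt_trans (le_trans H HB) Hlt; by rewrite ltxx.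
Qed.

End Final.
Section Main.
Variable R : realType.

Lemma eqle' (a b : R) : a = b -> a <= b. Proof. by move->. Qed.

Lemma l2_f n d (f : 'I_n -> 'rV[R]_d) u v :
  l2norm (f u - f v) = Num.sqrt (sq (fun i => f u 0 i - f v 0 i)).
Proof.
rewrite /l2norm /sq; congr Num.sqrt; apply: eq_bigr => i _; by rewrite !mxE.
Qed.

Definition gemb n d k (f : 'I_n -> 'rV[R]_d) (S : {ffun 'I_k -> {ffun 'I_d -> bool}})
  (u : 'I_n) : 'rV[R]_k := \row_(j < k) Zs (fun i => f u 0 i) (S j).

Lemma l2_g n d k (f : 'I_n -> 'rV[R]_d) S u v :
  l2norm (gemb f S u - gemb f S v) = Num.sqrt (Y (k:=k) (fun i => f u 0 i - f v 0 i) S).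
Proof.
rewrite /l2norm /Y; congr Num.sqrt; apply: eq_bigr => j _.
rewrite !mxE /Zs -sumrB; congr (_ ^+ 2); apply: eq_bigr => i _; by rewrite mulrBr.
Qed.

Lemma Y_ge0 d k (x : 'I_d -> R) S : 0 <= Y (k:=k) x S.
Proof. by apply: sumr_ge0 => j _; exact: sqr_ge0. Qed.

Lemma sqr_lt (p q : R) : 0 <= p -> p < q -> p ^+ 2 < q ^+ 2.
Proof.
move=> p0 pq; rewrite ltr_pXn2r // nnegrE //; exact: ltW (le_lt_trans p0 pq).
Qed.

Lemma ineq_transfer (a K sa sb ya yb : R) : 0 < a -> a < 1 -> 0 < K ->
  0 <= sa -> 0 <= sb -> 0 <= ya -> 0 <= yb ->
  ya <= (1 + a / 3) * K * sa -> (1 - a / 5) * K * sb <= yb ->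
  (1 + a) * Num.sqrt sa < Num.sqrt sb ->
  (1 + a / 2) * Num.sqrt ya < Num.sqrt yb.
Proof.
move=> a0 a1 K0 sa0 sb0 ya0 yb0 hya hyb H.
have H2 := sqr_lt (mulr_ge0 (ltW (ltr_wpDr (ltW a0) ltr01)) (sqrtr_ge0 sa)) H.
rewrite exprMn !sqr_sqrtr // in H2.
have c1 : (1 + a / 2) ^+ 2 * (1 + a / 3) <= (1 + a) ^+ 2 * (1 - a / 5) by nra.
have st1 : (1 + a / 2) ^+ 2 * ya <= (1 + a / 2) ^+ 2 * ((1 + a / 3) * K * sa).
  by apply: ler_wpM2l => //; exact: sqr_ge0.
have st2 : (1 + a / 2) ^+ 2 * ((1 + a / 3) * K * sa) <=
           (1 + a) ^+ 2 * (1 - a / 5) * (K * sa).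
  have -> : (1 + a / 2) ^+ 2 * ((1 + a / 3) * K * sa) =
            (1 + a / 2) ^+ 2 * (1 + a / 3) * (K * sa) by ring.
  by apply: ler_wpM2r => //; rewrite mulr_ge0 // ltW.
have st3 : (1 + a) ^+ 2 * (1 - a / 5) * (K * sa) < (1 - a / 5) * K * sb.
  have -> : (1 + a) ^+ 2 * (1 - a / 5) * (K * sa) = ((1 - a / 5) * K) * ((1 + a) ^+ 2 * sa) by ring.
  by rewrite ltr_pM2l // mulr_gt0 //; lra.
have fin : ((1 + a / 2) * Num.sqrt ya) ^+ 2 < Num.sqrt yb ^+ 2.
  rewrite exprMn !sqr_sqrtr //.
  exact: le_lt_trans st1 (le_lt_trans st2 (lt_le_trans st3 hyb)).
rewrite -(ltr_pXn2r (n := 2)) // nnegrE ?sqrtr_ge0 // mulr_ge0 ?sqrtr_ge0 //; lra.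
Qed.

Lemma d1_ge n (a : R) : (1 <= n)%N -> 0 < a ->
  1000 * ln (n%:R : R) / a ^+ 2 <= (d1 n a)%:R.
Proof.
move=> n1 a0.
have X0 : 0 <= 1000 * ln (n%:R : R) / a ^+ 2.
  by rewrite divr_ge0 ?sqr_ge0 // mulr_ge0 // ln_ge0 // (ler_nat R 1 n).
rewrite /d1 natr_absz ger0_norm; first exact: ceil_ge.
by rewrite ceil_ge0 (lt_le_trans _ X0) // ltrN10.
Qed.

Lemma embed n d (f : 'I_n -> 'rV[R]_d) (a : R) : 0 < a -> a < 1 ->
  exists g : 'I_n -> 'rV[R]_(d1 n a), forall u v w,
    (1 + a) * l2norm (f u - f v) < l2norm (f u - f w) ->
    (1 + a / 2) * l2norm (g u - g v) < l2norm (g u - g w).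
Proof.
move=> a0 a1.
case: (leqP n 1) => n1.
  exists (fun _ => 0) => u v w.
  have -> : v = w by apply: val_inj => /=; move: (ltn_ord v) (ltn_ord w); lia.
  move=> H; exfalso; move: H; set L := l2norm _.
  have L0 : 0 <= L by rewrite /L /l2norm sqrtr_ge0.
  move=> H; have : L < L by apply: le_lt_trans _ H; nra.
  by rewrite ltxx.
set k := d1 n a.
have hk := @d1_ge n a (ltnW n1) a0.
have lnp : 0 < ln (n%:R : R) by apply: ln_gt0; rewrite (ltr_nat R 1 n).
have a2 : 0 < a ^+ 2 by rewrite exprn_gt0.
have kL : 1000 * ln (n%:R : R) <= k%:R * a ^+ 2.
  by rewrite -ler_pdivrMr.
have K0 : 0 < (k%:R : R).
  apply: lt_le_trans hk; rewrite divr_gt0 // mulr_gt0 //.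
have [S HS] := exists_good f a0 a1 n1 kL.
exists (gemb f S) => u v w.
rewrite !l2_g !l2_f => H.
have [h1 _] := HS u v; have [_ h2] := HS u w.
apply: (ineq_transfer a0 a1 K0 (sq_ge0 _) (sq_ge0 _) (Y_ge0 _ _) (Y_ge0 _ _) _ _ H).
  by rewrite leNgt.
by rewrite leNgt.
Qed.

Lemma shat n d (a : R) (Q : {set query n}) : 0 < a -> a < 1 ->
  shattered d a Q -> shattered (d1 n a) (a / 2) Q.
Proof.
move=> a0 a1 HQ lab.
have [f Hf] := HQ lab.
have [g Hg] := embed f a0 a1.
exists g => q qQ; have := Hf q qQ.
case: q qQ => [[u v] w] _ /=; case: (lab _) => /=; exact: Hg.
Qed.

End Main.

Unset Implicit Arguments.

Theorem mainTheorem11 (R : realType) (n d : nat) (alpha : R) :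
  0 < alpha -> alpha < 1 ->
  (T n d alpha <= T n (d1 n alpha) (alpha / 2))%N.
Proof.
move=> a0 a1; rewrite /T; apply/bigmax_leqP => Q /asboolP HQ.
apply: leq_bigmax_cond; apply/asboolP; exact: shat.
Qed.
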